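(* The identities (A5) $x\wedge(y\wedge z)\approx (y\wedge x)\wedge z$, (J5') $x\approx (x'\wedge y)'\wedge(x'\wedge y')'$ form a 2-base for the variety $\mathbb{BA}$ of Boolean algebras (in the language $\langle\wedge,{}'\rangle$).
   Context: Algebras are of type $\langle \wedge, {}'\rangle$ with $\wedge$ binary and ${}'$ unary. The variety $\mathbb{BA}$ of Boolean algebras in this language consists of the algebras $\langle B,\wedge,{}'\rangle$ obtained from Boolean algebras by keeping only meet and complement (equivalently, the variety generated by the two-element Boolean algebra with meet and complement). A base for a variety is an independent set of identities (no identity in the set follows from the others) that defines the variety; an $n$-base is a base with exactly $n$ identities. *)

(* Defs.v *)
Set Implicit Arguments.

(* An algebra of type </\, '> (binary meet, unary complement).
   Algebras are nonempty, as usual in universal algebra. *)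
Record malg := MAlg {
  carrier :> Type;
  mt : carrier -> carrier -> carrier;
  cp : carrier -> carrier;
  witness : carrier
}.

Definition satA5 (A : malg) : Prop :=
  forall x y z : A, @mt A x (@mt A y z) = @mt A (@mt A y x) z.

Definition satJ5' (A : malg) : Prop :=
  forall x y : A, x = @mt A (@cp A (@mt A (@cp A x) y)) (@cp A (@mt A (@cp A x) (@cp A y))).

Definition is_boolean_algebra (B : Type) (meet join : B -> B -> B)
  (compl : B -> B) (bot top : B) : Prop :=
  (forall x y, meet x y = meet y x) /\
  (forall x y, join x y = join y x) /\
  (forall x y z, meet x (meet y z) = meet (meet x y) z) /\
  (forall x y z, join x (join y z) = join (join x y) z) /\
  (forall x y, meet x (join x y) = x) /\
  (forall x y, join x (meet x y) = x) /\
  (forall x y z, meet x (join y z) = join (meet x y) (meet x z)) /\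
  (forall x, meet x bot = bot) /\
  (forall x, join x top = top) /\
  (forall x, meet x (compl x) = bot) /\
  (forall x, join x (compl x) = top).

Definition in_BA (A : malg) : Prop :=
  exists (join : A -> A -> A) (bot top : A),
    is_boolean_algebra (@mt A) join (@cp A) bot top.

(* Main.v *)
Require Import Defs.
From Stdlib Require Import Setoid.

Section Core.
Variable A : malg.
Hypothesis HA : satA5 A.
Hypothesis HJ : satJ5' A.
Lemma CE0 : forall v0 v1 v2 : A, (@mt A v0 (@mt A v1 v2)) = (@mt A (@mt A v1 v0) v2).
Proof. exact HA. Qed.

Lemma CE1 : forall v0 v1 v2 : A, (@mt A v0 (@mt A v1 v2)) = (@mt A (@mt A v1 v0) v2).
Proof. intros v0 v1 v2. exact (CE0 v0 v1 v2). Qed.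

Lemma CE2 : forall v0 v1 : A, v0 = (@mt A (@cp A (@mt A (@cp A v0) v1)) (@cp A (@mt A (@cp A v0) (@cp A v1)))).
Proof. exact HJ. Qed.

Lemma CE3 : forall v0 v1 : A, v0 = (@mt A (@cp A (@mt A (@cp A v0) v1)) (@cp A (@mt A (@cp A v0) (@cp A v1)))).
Proof. intros v0 v1. exact (CE2 v0 v1). Qed.

Lemma CE4 : forall v0 v1 v2 : A, (@mt A v0 v1) = (@mt A (@cp A (@mt A (@cp A v0) (@cp A v2))) (@mt A (@cp A (@mt A (@cp A v0) v2)) v1)).
Proof. intros v0 v1 v2. exact (eq_trans (f_equal (fun h : carrier A => (@mt A h v1)) (CE3 v0 v2)) (eq_sym (CE1 (@cp A (@mt A (@cp A v0) (@cp A v2))) (@cp A (@mt A (@cp A v0) v2)) v1))). Qed.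

Lemma CE5 : forall v0 v1 : A, (@mt A (@cp A (@mt A (@cp A (@mt A (@cp A v0) v1)) (@mt A (@cp A v0) (@cp A v1)))) (@cp A v0)) = (@mt A (@cp A v0) v1).
Proof. intros v0 v1. exact (eq_trans (f_equal (fun h : carrier A => (@mt A (@cp A (@mt A (@cp A (@mt A (@cp A v0) v1)) (@mt A (@cp A v0) (@cp A v1)))) (@cp A h))) (CE3 v0 v1)) (eq_sym (CE3 (@mt A (@cp A v0) v1) (@mt A (@cp A v0) (@cp A v1))))). Qed.

Lemma CE6 : forall v0 v1 : A, (@mt A (@cp A (@mt A (@cp A v0) (@cp A v1))) v0) = (@mt A v0 (@cp A (@mt A (@cp A v0) (@cp A v1)))).
Proof. intros v0 v1. exact (eq_trans (f_equal (fun h : carrier A => (@mt A (@cp A (@mt A (@cp A v0) (@cp A v1))) h)) (CE3 v0 v1)) (eq_sym (CE4 v0 (@cp A (@mt A (@cp A v0) (@cp A v1))) v1))). Qed.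

Lemma CE7 : forall v0 v1 : A, (@mt A (@cp A v0) (@cp A (@mt A (@cp A (@mt A (@cp A v0) v1)) (@cp A (@cp A (@mt A (@cp A v0) (@cp A v1))))))) = (@mt A (@cp A v0) v1).
Proof. intros v0 v1. exact (eq_trans (f_equal (fun h : carrier A => (@mt A (@cp A h) (@cp A (@mt A (@cp A (@mt A (@cp A v0) v1)) (@cp A (@cp A (@mt A (@cp A v0) (@cp A v1)))))))) (CE3 v0 v1)) (eq_sym (CE3 (@mt A (@cp A v0) v1) (@cp A (@mt A (@cp A v0) (@cp A v1)))))). Qed.

Lemma CE14 : forall v0 v1 v2 : A, (@mt A (@cp A v0) (@mt A (@cp A (@mt A (@cp A (@mt A (@cp A v0) v1)) (@mt A (@cp A v0) (@cp A v1)))) v2)) = (@mt A v1 (@mt A (@cp A v0) v2)).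
Proof. intros v0 v1 v2. exact (eq_trans (eq_trans (f_equal (fun h : carrier A => (@mt A (@cp A h) (@mt A (@cp A (@mt A (@cp A (@mt A (@cp A v0) v1)) (@mt A (@cp A v0) (@cp A v1)))) v2))) (CE3 v0 v1)) (eq_sym (CE4 (@mt A (@cp A v0) v1) v2 (@mt A (@cp A v0) (@cp A v1))))) (eq_sym (CE1 v1 (@cp A v0) v2))). Qed.

Lemma CE15 : forall v0 v1 : A, (@mt A (@cp A v0) (@mt A (@cp A v0) v1)) = (@mt A v1 (@mt A (@cp A v0) (@cp A v0))).
Proof. intros v0 v1. exact (eq_trans (f_equal (fun h : carrier A => (@mt A (@cp A v0) h)) (eq_sym (CE5 v0 v1))) (CE14 v0 v1 (@cp A v0))). Qed.

Lemma CE17 : forall v0 v1 v2 : A, (@mt A v0 (@mt A v1 (@mt A (@cp A v2) (@cp A v2)))) = (@mt A (@cp A v2) (@mt A (@cp A v2) (@mt A v1 v0))).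
Proof. intros v0 v1 v2. exact (eq_trans (CE1 v0 v1 (@mt A (@cp A v2) (@cp A v2))) (eq_sym (CE15 v2 (@mt A v1 v0)))). Qed.

Lemma CE18 : forall v0 v1 v2 : A, (@mt A (@cp A v0) (@mt A (@cp A v0) (@mt A v1 v2))) = (@mt A v1 (@mt A (@cp A v0) (@mt A (@cp A v0) v2))).
Proof. intros v0 v1 v2. exact (eq_trans (eq_trans (eq_trans (eq_trans (CE1 (@cp A v0) (@cp A v0) (@mt A v1 v2)) (CE1 (@mt A (@cp A v0) (@cp A v0)) v1 v2)) (f_equal (fun h : carrier A => (@mt A h v2)) (eq_sym (CE15 v0 v1)))) (eq_sym (CE1 (@mt A (@cp A v0) v1) (@cp A v0) v2))) (eq_sym (CE1 v1 (@cp A v0) (@mt A (@cp A v0) v2)))). Qed.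

Lemma CE24 : forall v0 v1 : A, (@mt A (@cp A (@mt A (@cp A v0) v1)) v0) = (@mt A v0 (@cp A (@mt A (@cp A v0) v1))).
Proof. intros v0 v1. exact (eq_trans (eq_trans (f_equal (fun h : carrier A => (@mt A (@cp A h) v0)) (eq_sym (CE7 v0 v1))) (CE6 v0 (@mt A (@cp A (@mt A (@cp A v0) v1)) (@cp A (@cp A (@mt A (@cp A v0) (@cp A v1))))))) (f_equal (fun h : carrier A => (@mt A v0 (@cp A h))) (CE7 v0 v1))). Qed.

Lemma CE28 : forall v0 v1 v2 : A, (@mt A v0 (@mt A v1 (@mt A (@cp A v2) (@cp A v2)))) = (@mt A (@cp A v2) (@mt A (@cp A v2) (@mt A v0 v1))).
Proof. intros v0 v1 v2. exact (eq_trans (f_equal (fun h : carrier A => (@mt A v0 h)) (eq_sym (CE15 v2 v1))) (eq_sym (CE18 v2 v0 v1))). Qed.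

Lemma CE49 : forall v0 v1 v2 : A, (@mt A (@cp A (@mt A (@cp A v0) (@cp A (@mt A (@cp A v0) v1)))) (@mt A (@cp A (@mt A v1 (@mt A (@cp A v0) (@cp A v0)))) v2)) = (@mt A v0 v2).
Proof. intros v0 v1 v2. exact (eq_trans (f_equal (fun h : carrier A => (@mt A (@cp A (@mt A (@cp A v0) (@cp A (@mt A (@cp A v0) v1)))) (@mt A (@cp A h) v2))) (eq_sym (CE15 v0 v1))) (eq_sym (CE4 v0 v2 (@mt A (@cp A v0) v1)))). Qed.

Lemma CE50 : forall v0 v1 v2 : A, (@mt A (@cp A (@mt A (@cp A v0) v1)) (@mt A (@cp A (@mt A (@cp A v0) v1)) (@mt A (@cp A (@mt A (@cp A v0) (@cp A v1))) v2))) = (@mt A v0 (@mt A (@cp A (@mt A (@cp A v0) v1)) v2)).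
Proof. intros v0 v1 v2. exact (eq_trans (eq_trans (eq_sym (CE28 (@cp A (@mt A (@cp A v0) (@cp A v1))) v2 (@mt A (@cp A v0) v1))) (f_equal (fun h : carrier A => (@mt A (@cp A (@mt A (@cp A v0) (@cp A v1))) h)) (eq_sym (CE15 (@mt A (@cp A v0) v1) v2)))) (eq_sym (CE4 v0 (@mt A (@cp A (@mt A (@cp A v0) v1)) v2) v1))). Qed.

Lemma CE53 : forall v0 v1 : A, (@mt A (@cp A (@mt A v0 (@mt A (@cp A v1) (@cp A v1)))) (@cp A (@mt A (@cp A v1) (@cp A (@mt A (@cp A v1) v0))))) = v1.
Proof. intros v0 v1. exact (eq_trans (f_equal (fun h : carrier A => (@mt A (@cp A h) (@cp A (@mt A (@cp A v1) (@cp A (@mt A (@cp A v1) v0)))))) (eq_sym (CE15 v1 v0))) (eq_sym (CE3 v1 (@mt A (@cp A v1) v0)))). Qed.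

Lemma CE57 : forall v0 v1 v2 : A, (@mt A (@cp A v0) (@mt A v1 (@mt A v2 (@mt A (@cp A v0) (@cp A v0))))) = (@mt A v1 (@mt A v2 (@mt A (@cp A v0) (@mt A (@cp A v0) (@cp A v0))))).
Proof. intros v0 v1 v2. exact (eq_trans (eq_trans (f_equal (fun h : carrier A => (@mt A (@cp A v0) h)) (CE17 v1 v2 v0)) (eq_sym (CE17 (@mt A v2 v1) (@cp A v0) v0))) (eq_sym (CE1 v1 v2 (@mt A (@cp A v0) (@mt A (@cp A v0) (@cp A v0)))))). Qed.

Lemma CE66 : forall v0 v1 v2 : A, (@mt A v0 (@mt A v1 (@cp A (@mt A (@cp A v1) v2)))) = (@mt A v1 (@mt A (@cp A (@mt A (@cp A v1) v2)) v0)).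
Proof. intros v0 v1 v2. exact (eq_trans (eq_trans (f_equal (fun h : carrier A => (@mt A v0 h)) (CE4 v1 (@cp A (@mt A (@cp A v1) v2)) v2)) (CE17 v0 (@cp A (@mt A (@cp A v1) (@cp A v2))) (@mt A (@cp A v1) v2))) (CE50 v1 v2 v0)). Qed.

Lemma CE74 : forall v0 v1 v2 : A, (@mt A (@cp A v0) (@mt A v1 (@mt A v2 (@mt A (@cp A v0) (@cp A v0))))) = (@mt A (@cp A v0) (@mt A (@cp A v0) (@mt A (@cp A v0) (@mt A v2 v1)))).
Proof. intros v0 v1 v2. exact (eq_trans (f_equal (fun h : carrier A => (@mt A (@cp A v0) h)) (CE17 v1 v2 v0)) (CE18 v0 (@cp A v0) (@mt A v2 v1))). Qed.

Lemma CE235 : forall v0 v1 : A, (@mt A v0 v1) = (@mt A v1 v0).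
Proof. intros v0 v1. exact (eq_trans (eq_trans (eq_trans (f_equal (fun h : carrier A => (@mt A v0 h)) (eq_sym (CE53 (@cp A v0) v1))) (eq_sym (CE66 (@cp A (@mt A (@cp A v1) (@cp A (@mt A (@cp A v1) (@cp A v0))))) v0 (@mt A (@cp A v1) (@cp A v1))))) (f_equal (fun h : carrier A => (@mt A (@cp A (@mt A (@cp A v1) (@cp A (@mt A (@cp A v1) (@cp A v0))))) h)) (eq_sym (CE24 v0 (@mt A (@cp A v1) (@cp A v1)))))) (CE49 v1 (@cp A v0) v0)). Qed.

Lemma CE261 : forall v0 v1 : A, (@mt A (@cp A v0) (@cp A (@mt A (@cp A v1) (@mt A (@cp A v0) (@cp A (@mt A (@cp A v0) v1)))))) = (@mt A (@cp A v0) v1).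
Proof. intros v0 v1. exact (eq_trans (eq_trans (eq_trans (CE235 (@cp A v0) (@cp A (@mt A (@cp A v1) (@mt A (@cp A v0) (@cp A (@mt A (@cp A v0) v1)))))) (f_equal (fun h : carrier A => (@mt A (@cp A h) (@cp A v0))) (CE1 (@cp A v1) (@cp A v0) (@cp A (@mt A (@cp A v0) v1))))) (f_equal (fun h : carrier A => (@mt A (@cp A h) (@cp A v0))) (CE235 (@mt A (@cp A v0) (@cp A v1)) (@cp A (@mt A (@cp A v0) v1))))) (CE5 v0 v1)). Qed.

Lemma CE264 : forall v0 v1 v2 : A, (@mt A v0 (@mt A v1 v2)) = (@mt A v2 (@mt A v1 v0)).
Proof. intros v0 v1 v2. exact (eq_trans (CE1 v0 v1 v2) (CE235 (@mt A v1 v0) v2)). Qed.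

Lemma CE266 : forall v0 v1 v2 : A, (@mt A v0 (@mt A v1 v2)) = (@mt A v1 (@mt A v0 v2)).
Proof. intros v0 v1 v2. exact (eq_trans (eq_trans (CE1 v0 v1 v2) (f_equal (fun h : carrier A => (@mt A h v2)) (eq_sym (CE235 v0 v1)))) (eq_sym (CE1 v1 v0 v2))). Qed.

Lemma CE277 : forall v0 v1 v2 : A, (@mt A v0 v1) = (@mt A (@cp A (@mt A (@cp A v0) v2)) (@mt A (@cp A (@mt A (@cp A v0) (@cp A v2))) v1)).
Proof. intros v0 v1 v2. exact (eq_trans (CE4 v0 v1 v2) (eq_sym (CE266 (@cp A (@mt A (@cp A v0) v2)) (@cp A (@mt A (@cp A v0) (@cp A v2))) v1))). Qed.

Lemma CE278 : forall v0 v1 v2 : A, (@mt A v0 (@mt A v1 v2)) = (@mt A v1 (@mt A v2 v0)).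
Proof. intros v0 v1 v2. exact (eq_trans (f_equal (fun h : carrier A => (@mt A v0 h)) (eq_sym (CE235 v2 v1))) (CE264 v0 v2 v1)). Qed.

Lemma CE284 : forall v0 v1 v2 : A, (@mt A (@cp A (@mt A (@cp A v0) (@mt A (@cp A v0) (@mt A (@cp A v0) (@mt A v1 v2))))) (@cp A (@mt A (@cp A v0) (@cp A (@mt A v2 (@mt A v1 (@mt A (@cp A v0) (@cp A v0)))))))) = v0.
Proof. intros v0 v1 v2. exact (eq_trans (eq_trans (eq_trans (f_equal (fun h : carrier A => (@mt A (@cp A (@mt A (@cp A v0) h)) (@cp A (@mt A (@cp A v0) (@cp A (@mt A v2 (@mt A v1 (@mt A (@cp A v0) (@cp A v0))))))))) (CE235 (@cp A v0) (@mt A (@cp A v0) (@mt A v1 v2)))) (f_equal (fun h : carrier A => (@mt A (@cp A h) (@cp A (@mt A (@cp A v0) (@cp A (@mt A v2 (@mt A v1 (@mt A (@cp A v0) (@cp A v0))))))))) (CE278 (@cp A v0) (@mt A (@cp A v0) (@mt A v1 v2)) (@cp A v0)))) (f_equal (fun h : carrier A => (@mt A (@cp A (@mt A (@mt A (@cp A v0) (@mt A v1 v2)) (@mt A (@cp A v0) (@cp A v0)))) (@cp A (@mt A (@cp A v0) (@cp A h))))) (CE17 v2 v1 v0))) (CE53 (@mt A (@cp A v0) (@mt A v1 v2)) v0)). Qed.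

Lemma CE287 : forall v0 v1 : A, (@mt A (@cp A (@mt A (@cp A v0) v1)) (@cp A (@mt A (@cp A v1) (@cp A v0)))) = v0.
Proof. intros v0 v1. exact (eq_trans (f_equal (fun h : carrier A => (@mt A (@cp A (@mt A (@cp A v0) v1)) (@cp A h))) (eq_sym (CE235 (@cp A v0) (@cp A v1)))) (eq_sym (CE3 v0 v1))). Qed.

Lemma CE290 : forall v0 v1 : A, (@mt A (@cp A (@mt A v0 (@cp A v1))) (@cp A (@mt A (@cp A v0) (@cp A v1)))) = v1.
Proof. intros v0 v1. exact (eq_trans (f_equal (fun h : carrier A => (@mt A (@cp A h) (@cp A (@mt A (@cp A v0) (@cp A v1))))) (eq_sym (CE235 (@cp A v1) v0))) (CE287 v1 v0)). Qed.

Lemma CE294 : forall v0 v1 : A, (@mt A v0 (@cp A (@mt A (@cp A v0) v1))) = (@mt A v0 (@cp A (@mt A (@cp A (@cp A v1)) (@cp A v0)))).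
Proof. intros v0 v1. exact (eq_trans (eq_trans (CE235 v0 (@cp A (@mt A (@cp A v0) v1))) (f_equal (fun h : carrier A => (@mt A (@cp A (@mt A (@cp A v0) v1)) h)) (eq_sym (CE287 v0 (@cp A v1))))) (eq_sym (CE277 v0 (@cp A (@mt A (@cp A (@cp A v1)) (@cp A v0))) v1))). Qed.

Lemma CE302 : forall v0 v1 v2 : A, (@mt A v0 v1) = (@mt A (@cp A (@mt A (@cp A v1) v2)) (@mt A v0 (@cp A (@mt A (@cp A v1) (@cp A v2))))).
Proof. intros v0 v1 v2. exact (eq_trans (eq_trans (f_equal (fun h : carrier A => (@mt A v0 h)) (CE3 v1 v2)) (CE264 v0 (@cp A (@mt A (@cp A v1) v2)) (@cp A (@mt A (@cp A v1) (@cp A v2))))) (CE278 (@cp A (@mt A (@cp A v1) (@cp A v2))) (@cp A (@mt A (@cp A v1) v2)) v0)). Qed.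

Lemma CE303 : forall v0 v1 : A, (@mt A v0 (@cp A (@mt A (@cp A v1) v0))) = (@mt A v1 (@cp A (@mt A v1 (@cp A v0)))).
Proof. intros v0 v1. exact (eq_trans (eq_trans (eq_trans (CE235 v0 (@cp A (@mt A (@cp A v1) v0))) (f_equal (fun h : carrier A => (@mt A (@cp A (@mt A (@cp A v1) v0)) h)) (eq_sym (CE290 v1 v0)))) (eq_sym (CE302 (@cp A (@mt A v1 (@cp A v0))) v1 v0))) (eq_sym (CE235 v1 (@cp A (@mt A v1 (@cp A v0)))))). Qed.

Lemma CE305 : forall v0 v1 : A, (@mt A v0 (@cp A (@mt A (@cp A v1) v0))) = (@mt A v1 (@cp A (@mt A (@cp A v0) v1))).
Proof. intros v0 v1. exact (eq_trans (eq_trans (eq_trans (CE235 v0 (@cp A (@mt A (@cp A v1) v0))) (f_equal (fun h : carrier A => (@mt A (@cp A (@mt A (@cp A v1) v0)) h)) (eq_sym (CE287 v0 v1)))) (eq_sym (CE302 (@cp A (@mt A (@cp A v0) v1)) v1 v0))) (eq_sym (CE235 v1 (@cp A (@mt A (@cp A v0) v1))))). Qed.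

Lemma CE350 : forall v0 v1 v2 : A, (@mt A v0 (@mt A (@cp A (@mt A v1 (@cp A v0))) v2)) = (@mt A v2 (@mt A v0 (@cp A (@mt A (@cp A v0) v1)))).
Proof. intros v0 v1 v2. exact (eq_trans (f_equal (fun h : carrier A => (@mt A v0 (@mt A (@cp A h) v2))) (eq_sym (CE235 (@cp A v0) v1))) (eq_sym (CE66 v2 v0 v1))). Qed.

Lemma CE390 : forall v0 v1 : A, (@mt A v0 (@mt A (@cp A (@mt A v1 (@cp A v0))) (@cp A (@mt A (@cp A (@cp A v1)) v0)))) = (@mt A v0 (@cp A v1)).
Proof. intros v0 v1. exact (eq_trans (eq_trans (CE350 v0 v1 (@cp A (@mt A (@cp A (@cp A v1)) v0))) (f_equal (fun h : carrier A => (@mt A (@cp A (@mt A (@cp A (@cp A v1)) v0)) h)) (CE294 v0 v1))) (eq_sym (CE302 v0 (@cp A v1) v0))). Qed.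

Lemma CE391 : forall v0 : A, (@mt A v0 (@cp A v0)) = (@mt A (@cp A v0) (@cp A (@cp A v0))).
Proof. intros v0. exact (eq_trans (eq_trans (CE235 v0 (@cp A v0)) (f_equal (fun h : carrier A => (@mt A (@cp A v0) h)) (eq_sym (CE287 v0 (@cp A (@cp A v0)))))) (CE390 (@cp A v0) (@cp A v0))). Qed.

Lemma CE392 : forall v0 : A, (@mt A (@cp A (@mt A v0 (@cp A v0))) (@cp A (@mt A v0 (@cp A (@cp A v0))))) = (@cp A v0).
Proof. intros v0. exact (eq_trans (eq_trans (CE235 (@cp A (@mt A v0 (@cp A v0))) (@cp A (@mt A v0 (@cp A (@cp A v0))))) (f_equal (fun h : carrier A => (@mt A (@cp A (@mt A v0 (@cp A (@cp A v0)))) (@cp A h))) (CE391 v0))) (CE290 v0 (@cp A v0))). Qed.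

Lemma CE393 : forall v0 : A, v0 = (@cp A (@cp A v0)).
Proof. intros v0. exact (eq_trans (CE3 v0 (@cp A (@cp A v0))) (CE392 (@cp A v0))). Qed.

Lemma CE404 : forall v0 v1 : A, (@mt A (@cp A (@mt A v0 v1)) (@cp A (@mt A (@cp A v0) v1))) = (@cp A v1).
Proof. intros v0 v1. exact (eq_trans (eq_trans (f_equal (fun h : carrier A => (@mt A (@cp A (@mt A v0 h)) (@cp A (@mt A (@cp A v0) v1)))) (CE393 v1)) (f_equal (fun h : carrier A => (@mt A (@cp A (@mt A v0 (@cp A (@cp A v1)))) (@cp A (@mt A (@cp A v0) h)))) (CE393 v1))) (CE290 v0 (@cp A v1))). Qed.

Lemma CE405 : forall v0 v1 : A, (@mt A (@cp A (@mt A v0 v1)) (@cp A (@mt A v1 (@cp A v0)))) = (@cp A v1).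
Proof. intros v0 v1. exact (eq_trans (f_equal (fun h : carrier A => (@mt A (@cp A (@mt A v0 v1)) (@cp A h))) (eq_sym (CE235 (@cp A v0) v1))) (CE404 v0 v1)). Qed.

Lemma CE406 : forall v0 v1 : A, (@mt A (@cp A (@mt A v0 v1)) (@cp A (@mt A (@cp A v1) v0))) = (@cp A v0).
Proof. intros v0 v1. exact (eq_trans (f_equal (fun h : carrier A => (@mt A (@cp A h) (@cp A (@mt A (@cp A v1) v0)))) (eq_sym (CE235 v1 v0))) (CE404 v1 v0)). Qed.

Lemma CE407 : forall v0 v1 : A, (@mt A (@cp A (@mt A v0 v1)) (@cp A (@mt A v0 (@cp A v1)))) = (@cp A v0).
Proof. intros v0 v1. exact (eq_trans (f_equal (fun h : carrier A => (@mt A (@cp A h) (@cp A (@mt A v0 (@cp A v1))))) (eq_sym (CE235 v1 v0))) (CE405 v1 v0)). Qed.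

Lemma CE410 : forall v0 v1 : A, (@mt A v0 (@cp A (@mt A v1 v0))) = (@mt A (@cp A v1) (@cp A (@mt A (@cp A v1) (@cp A v0)))).
Proof. intros v0 v1. exact (eq_trans (f_equal (fun h : carrier A => (@mt A v0 (@cp A (@mt A h v0)))) (CE393 v1)) (CE303 v0 (@cp A v1))). Qed.

Lemma CE425 : forall v0 v1 v2 : A, (@mt A v0 (@cp A v1)) = (@mt A (@cp A (@mt A v2 v1)) (@mt A v0 (@cp A (@mt A (@cp A v2) v1)))).
Proof. intros v0 v1 v2. exact (eq_trans (f_equal (fun h : carrier A => (@mt A v0 h)) (eq_sym (CE404 v2 v1))) (CE266 v0 (@cp A (@mt A v2 v1)) (@cp A (@mt A (@cp A v2) v1)))). Qed.

Lemma CE441 : forall v0 v1 v2 : A, (@mt A v0 (@cp A v1)) = (@mt A (@cp A (@mt A v1 v2)) (@mt A v0 (@cp A (@mt A (@cp A v2) v1)))).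
Proof. intros v0 v1 v2. exact (eq_trans (f_equal (fun h : carrier A => (@mt A v0 h)) (eq_sym (CE406 v1 v2))) (CE266 v0 (@cp A (@mt A v1 v2)) (@cp A (@mt A (@cp A v2) v1)))). Qed.

Lemma CE448 : forall v0 v1 v2 : A, (@mt A v0 (@cp A v1)) = (@mt A (@cp A (@mt A v1 v2)) (@mt A v0 (@cp A (@mt A v1 (@cp A v2))))).
Proof. intros v0 v1 v2. exact (eq_trans (f_equal (fun h : carrier A => (@mt A v0 h)) (eq_sym (CE407 v1 v2))) (CE266 v0 (@cp A (@mt A v1 v2)) (@cp A (@mt A v1 (@cp A v2))))). Qed.

Lemma CE451 : forall v0 v1 : A, (@mt A (@cp A v0) (@cp A (@mt A (@cp A v0) v1))) = (@mt A (@cp A v1) (@cp A (@mt A v0 (@cp A v1)))).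
Proof. intros v0 v1. exact (eq_trans (f_equal (fun h : carrier A => (@mt A (@cp A v0) (@cp A (@mt A (@cp A v0) h)))) (CE393 v1)) (eq_sym (CE410 (@cp A v1) v0))). Qed.

Lemma CE462 : forall v0 v1 : A, (@mt A v0 (@cp A v0)) = (@mt A v1 (@cp A v1)).
Proof. intros v0 v1. exact (eq_trans (eq_trans (CE441 v0 v0 v1) (f_equal (fun h : carrier A => (@mt A (@cp A (@mt A v0 v1)) h)) (eq_sym (CE305 v1 v0)))) (eq_sym (CE425 v1 v1 v0))). Qed.

Lemma CE463 : forall v0 v1 : A, (@mt A (@cp A (@mt A v0 v0)) (@cp A (@mt A v1 (@cp A v1)))) = (@cp A v0).
Proof. intros v0 v1. exact (eq_trans (f_equal (fun h : carrier A => (@mt A (@cp A (@mt A v0 v0)) (@cp A h))) (eq_sym (CE462 v0 v1))) (CE407 v0 v0)). Qed.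

Lemma CE464 : forall v0 v1 v2 : A, (@mt A v0 (@mt A v1 (@cp A v1))) = (@mt A v2 (@mt A (@cp A v2) v0)).
Proof. intros v0 v1 v2. exact (eq_trans (f_equal (fun h : carrier A => (@mt A v0 h)) (eq_sym (CE462 v2 v1))) (CE278 v0 v2 (@cp A v2))). Qed.

Lemma CE466 : forall v0 v1 v2 : A, (@mt A v0 (@mt A v1 (@cp A (@mt A v1 v0)))) = (@mt A v2 (@cp A v2)).
Proof. intros v0 v1 v2. exact (eq_trans (CE1 v0 v1 (@cp A (@mt A v1 v0))) (CE462 (@mt A v1 v0) v2)). Qed.

Lemma CE470 : forall v0 v1 v2 : A, (@mt A v0 (@mt A v1 (@cp A v1))) = (@mt A v0 (@mt A v2 (@cp A v2))).
Proof. intros v0 v1 v2. exact (eq_trans (CE464 v0 v1 v0) (eq_sym (CE464 v0 v2 v0))). Qed.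

Lemma CE471 : forall v0 v1 v2 : A, (@mt A v0 (@mt A v1 (@cp A v0))) = (@mt A v2 (@mt A (@cp A v2) v1)).
Proof. intros v0 v1 v2. exact (eq_trans (eq_sym (CE266 v1 v0 (@cp A v0))) (CE464 v1 v0 v2)). Qed.

Lemma CE473 : forall v0 v1 : A, (@mt A v0 (@mt A v0 (@cp A v0))) = (@mt A v1 (@cp A v1)).
Proof. intros v0 v1. exact (eq_trans (eq_trans (eq_trans (eq_trans (eq_trans (f_equal (fun h : carrier A => (@mt A v0 h)) (CE235 v0 (@cp A v0))) (CE278 v0 (@cp A v0) v0)) (CE235 (@cp A v0) (@mt A v0 v0))) (f_equal (fun h : carrier A => (@mt A h (@cp A v0))) (CE393 (@mt A v0 v0)))) (f_equal (fun h : carrier A => (@mt A (@cp A (@cp A (@mt A v0 v0))) h)) (eq_sym (CE463 v0 (@cp A (@mt A v0 v0)))))) (CE466 (@cp A (@cp A (@mt A v0 v0))) (@cp A (@mt A v0 v0)) v1)). Qed.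

Lemma CE474 : forall v0 v1 v2 : A, (@mt A v0 (@mt A (@cp A v0) v1)) = (@mt A v2 (@cp A v2)).
Proof. intros v0 v1 v2. exact (eq_trans (eq_sym (CE471 v1 v1 v0)) (CE473 v1 v2)). Qed.

Lemma CE475 : forall v0 v1 v2 : A, (@mt A v0 (@mt A v1 (@cp A v1))) = (@mt A v2 (@cp A v2)).
Proof. intros v0 v1 v2. exact (eq_trans (eq_sym (CE470 v0 v0 v1)) (CE473 v0 v2)). Qed.

Lemma CE593 : forall v0 v1 : A, (@mt A v0 (@cp A (@mt A v1 (@cp A v1)))) = (@mt A v0 v0).
Proof. intros v0 v1. exact (eq_trans (eq_trans (eq_trans (f_equal (fun h : carrier A => (@mt A h (@cp A (@mt A v1 (@cp A v1))))) (CE393 v0)) (f_equal (fun h : carrier A => (@mt A (@cp A (@cp A v0)) (@cp A h))) (eq_sym (CE474 (@cp A v0) (@cp A (@mt A (@cp A (@cp A v0)) v0)) v1)))) (CE261 (@cp A v0) v0)) (f_equal (fun h : carrier A => (@mt A h v0)) (eq_sym (CE393 v0)))). Qed.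

Lemma CE596 : forall v0 v1 v2 : A, (@mt A v0 (@cp A (@mt A v1 (@mt A v2 (@cp A v2))))) = (@mt A v0 v0).
Proof. intros v0 v1 v2. exact (eq_trans (f_equal (fun h : carrier A => (@mt A v0 (@cp A h))) (CE475 v1 v2 v0)) (CE593 v0 v0)). Qed.

Lemma CE597 : forall v0 v1 v2 : A, (@mt A v0 (@cp A (@mt A v1 (@mt A (@cp A v1) v2)))) = (@mt A v0 v0).
Proof. intros v0 v1 v2. exact (eq_trans (f_equal (fun h : carrier A => (@mt A v0 (@cp A h))) (CE474 v1 v2 v0)) (CE593 v0 v0)). Qed.

Lemma CE599 : forall v0 v1 : A, (@mt A (@cp A (@mt A v0 v0)) (@mt A v1 v1)) = (@mt A v1 (@cp A v0)).
Proof. intros v0 v1. exact (eq_trans (f_equal (fun h : carrier A => (@mt A (@cp A (@mt A v0 v0)) h)) (eq_sym (CE593 v1 v0))) (eq_sym (CE448 v1 v0 v0))). Qed.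

Lemma CE612 : forall v0 v1 : A, (@mt A v0 (@mt A v0 (@cp A (@mt A v1 v1)))) = (@mt A v0 (@cp A v1)).
Proof. intros v0 v1. exact (eq_trans (eq_sym (CE278 (@cp A (@mt A v1 v1)) v0 v0)) (CE599 v1 v0)). Qed.

Lemma CE614 : forall v0 v1 : A, (@mt A v0 (@mt A v0 v0)) = (@mt A v0 (@cp A (@mt A v1 (@cp A v1)))).
Proof. intros v0 v1. exact (eq_trans (f_equal (fun h : carrier A => (@mt A v0 h)) (eq_sym (CE596 v0 (@mt A v1 (@cp A v1)) v1))) (CE612 v0 (@mt A v1 (@cp A v1)))). Qed.

Lemma CE615 : forall v0 : A, (@mt A v0 v0) = (@mt A v0 (@mt A v0 v0)).
Proof. intros v0. exact (eq_trans (eq_sym (CE593 v0 v0)) (eq_sym (CE614 v0 v0))). Qed.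

Lemma CE658 : forall v0 v1 v2 : A, (@mt A (@cp A v0) (@mt A v1 (@mt A v2 (@mt A (@cp A v0) (@cp A v0))))) = (@mt A v1 (@mt A v2 (@mt A (@cp A v0) (@cp A v0)))).
Proof. intros v0 v1 v2. exact (eq_trans (CE57 v0 v1 v2) (f_equal (fun h : carrier A => (@mt A v1 (@mt A v2 h))) (eq_sym (CE615 (@cp A v0))))). Qed.

Lemma CE682 : forall v0 v1 v2 : A, (@mt A v0 (@mt A v1 (@mt A (@cp A v2) (@cp A v2)))) = (@mt A (@cp A v2) (@mt A (@cp A v2) (@mt A (@cp A v2) (@mt A v1 v0)))).
Proof. intros v0 v1 v2. exact (eq_trans (eq_sym (CE658 v2 v0 v1)) (CE74 v2 v0 v1)). Qed.

Lemma CE698 : forall v0 v1 v2 : A, (@mt A v0 (@cp A (@mt A v0 (@mt A v1 (@mt A v2 (@mt A (@cp A v0) (@cp A v0))))))) = v0.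
Proof. intros v0 v1 v2. exact (eq_trans (eq_trans (eq_trans (eq_trans (f_equal (fun h : carrier A => (@mt A v0 (@cp A (@mt A h (@mt A v1 (@mt A v2 (@mt A (@cp A v0) (@cp A v0)))))))) (CE393 v0)) (f_equal (fun h : carrier A => (@mt A h (@cp A (@mt A (@cp A (@cp A v0)) (@mt A v1 (@mt A v2 (@mt A (@cp A v0) (@cp A v0)))))))) (CE393 v0))) (CE451 (@cp A v0) (@mt A v1 (@mt A v2 (@mt A (@cp A v0) (@cp A v0)))))) (f_equal (fun h : carrier A => (@mt A (@cp A h) (@cp A (@mt A (@cp A v0) (@cp A (@mt A v1 (@mt A v2 (@mt A (@cp A v0) (@cp A v0))))))))) (CE682 v1 v2 v0))) (CE284 v0 v2 v1)). Qed.

Lemma CE730 : forall v0 : A, (@mt A v0 v0) = v0.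
Proof. intros v0. exact (eq_trans (eq_sym (CE597 v0 v0 (@mt A v0 (@mt A (@cp A v0) (@cp A v0))))) (CE698 v0 (@cp A v0) v0)). Qed.

Lemma Ccomm : forall k1 k2 : A, (@mt A k1 k2) = (@mt A k2 k1).
Proof. intros k1 k2. exact (CE235 k1 k2). Qed.

Lemma Cassoc : forall k1 k2 k3 : A, (@mt A k1 (@mt A k2 k3)) = (@mt A (@mt A k1 k2) k3).
Proof. intros k1 k2 k3. exact (eq_trans (eq_trans (f_equal (fun h : carrier A => (@mt A k1 h)) (CE235 k2 k3)) (CE266 k1 k3 k2)) (CE235 k3 (@mt A k1 k2))). Qed.

Lemma Cdn : forall k1 : A, (@cp A (@cp A k1)) = k1.
Proof. intros k1. exact (eq_sym (CE393 k1)). Qed.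

Lemma Cidem : forall k1 : A, (@mt A k1 k1) = k1.
Proof. intros k1. exact (CE730 k1). Qed.

Local Notation "x ** y" := (@mt A x y) (at level 40, left associativity).
Local Notation "! x" := (@cp A x) (at level 35, right associativity).

Lemma comm : forall x y : A, x ** y = y ** x.
Proof. exact Ccomm. Qed.
Lemma assoc : forall x y z : A, x ** (y ** z) = (x ** y) ** z.
Proof. exact Cassoc. Qed.
Lemma dn : forall x : A, ! ! x = x.
Proof. exact Cdn. Qed.
Lemma idem : forall x : A, x ** x = x.
Proof. exact Cidem. Qed.

Lemma absl : forall p q : A, (p ** q) ** p = p ** q.
Proof. intros p q. rewrite <- assoc, (comm q p), assoc, idem. reflexivity. Qed.
Lemma absr : forall p q : A, (p ** q) ** q = p ** q.
Proof. intros p q. rewrite <- assoc, idem. reflexivity. Qed.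

Lemma leJ : forall x y : A, x ** !(!x ** y) = x.
Proof.
  intros x y. pose proof (HJ x y) as H.
  set (P := !(!x ** y)) in *. set (Q := !(!x ** !y)) in *.
  rewrite H at 1. rewrite <- assoc, (comm Q P), assoc, idem. symmetry; exact H.
Qed.

Lemma anti : forall a b : A, a ** b = a -> !b ** !a = !b.
Proof.
  intros a b H. pose proof (leJ (!b) a) as E. rewrite dn, (comm b a), H in E. exact E.
Qed.

Lemma glb : forall x y z : A, z ** x = z -> z ** y = z -> z ** (x ** y) = z.
Proof. intros x y z H1 H2. rewrite assoc, H1, H2. reflexivity. Qed.

Lemma trans : forall a b c : A, a ** b = a -> b ** c = b -> a ** c = a.
Proof. intros a b c H1 H2. rewrite <- H1, <- assoc, H2. reflexivity. Qed.

Lemma antisym : forall a b : A, a ** b = a -> b ** a = b -> a = b.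
Proof. intros a b H1 H2. rewrite <- H1, comm. exact H2. Qed.

Definition join (x y : A) : A := !(!x ** !y).

Lemma le_join_l : forall x y : A, x ** join x y = x.
Proof. intros x y. unfold join. pose proof (anti _ _ (absl (!x) (!y))) as E. rewrite dn in E. exact E. Qed.
Lemma le_join_r : forall x y : A, y ** join x y = y.
Proof. intros x y. unfold join. rewrite (comm (!x) (!y)). apply le_join_l. Qed.

Lemma join_lub : forall x y z : A, x ** z = x -> y ** z = y -> join x y ** z = join x y.
Proof.
  intros x y z H1 H2. unfold join.
  pose proof (anti _ _ (glb _ _ _ (anti _ _ H1) (anti _ _ H2))) as E. rewrite dn in E. exact E.
Qed.

Lemma le_meet_l : forall x y : A, (x ** y) ** x = x ** y.
Proof. exact absl. Qed.
Lemma le_meet_r : forall x y : A, (x ** y) ** y = x ** y.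
Proof. exact absr. Qed.

Lemma mono : forall p q r : A, p ** q = p -> (r ** p) ** (r ** q) = r ** p.
Proof.
  intros p q r H. apply glb. apply le_meet_l. apply (trans _ p). apply le_meet_r. exact H.
Qed.

Lemma bot_le : forall x y : A, (x ** !x) ** y = x ** !x.
Proof.
  intros x y. rewrite (HJ y x) at 1. apply glb.
  - apply (trans _ (!x)). apply le_meet_r. apply (anti _ _ (le_meet_r (!y) x)).
  - apply (trans _ x). apply le_meet_l.
    pose proof (anti _ _ (le_meet_r (!y) (!x))) as E. rewrite dn in E. exact E.
Qed.

Lemma Jd : forall a y : A, a = join (a ** y) (a ** !y).
Proof.
  intros a y. unfold join. pose proof (HJ (!a) y) as E. rewrite dn in E.
  rewrite <- E, dn. reflexivity.
Qed.

Lemma dist : forall x y z : A, x ** join y z = join (x ** y) (x ** z).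
Proof.
  intros x y z. apply antisym.
  - set (a := x ** join y z).
    assert (Hb : (!y ** join y z) ** z = !y ** join y z).
    { set (b := !y ** join y z).
      assert (Hj : join (b ** z) (b ** !z) ** (b ** z) = join (b ** z) (b ** !z)).
      { apply join_lub. apply idem.
        assert (E : b ** !z = (!y ** !z) ** !(!y ** !z)).
        { unfold b, join. rewrite <- assoc, (comm _ (!z)), assoc. reflexivity. }
        rewrite E. apply bot_le. }
      rewrite <- (Jd b z) in Hj.
      apply (trans _ (b ** z)). exact Hj. apply le_meet_r. }
    assert (Hj : join (a ** y) (a ** !y) ** join (x ** y) (x ** z) = join (a ** y) (a ** !y)).
    2:{ rewrite <- (Jd a y) in Hj. exact Hj. }
    assert (Ha1 : a ** x = a) by (unfold a; apply le_meet_l).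
    assert (Ha2 : a ** join y z = a) by (unfold a; apply le_meet_r).
    apply join_lub.
    + apply (trans _ (x ** y)).
      * apply glb. apply (trans _ a). apply le_meet_l. exact Ha1. apply le_meet_r.
      * apply le_join_l.
    + apply (trans _ (x ** z)).
      * apply glb. apply (trans _ a). apply le_meet_l. exact Ha1.
        apply (trans _ (!y ** join y z)). 2: exact Hb.
        apply glb. apply le_meet_r. apply (trans _ a). apply le_meet_l. exact Ha2.
      * apply le_join_r.
  - apply join_lub.
    + apply glb. apply le_meet_l. apply (trans _ y). apply le_meet_r. apply le_join_l.
    + apply glb. apply le_meet_l. apply (trans _ z). apply le_meet_r. apply le_join_r.
Qed.

Lemma to_BA : in_BA A.
Proof.
  set (w := witness A). set (bot := w ** !w).
  assert (Hbot : forall x : A, x ** bot = bot).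
  { intro x. rewrite comm. apply bot_le. }
  assert (Hc : forall x : A, x ** !x = bot).
  { intro x. apply antisym. apply bot_le. apply bot_le. }
  exists join, bot, (!bot).
  unfold is_boolean_algebra.
  split; [exact comm|].
  split; [intros x y; unfold join; rewrite comm; reflexivity|].
  split; [exact assoc|].
  split; [intros x y z; unfold join; rewrite !dn, assoc; reflexivity|].
  split; [exact le_join_l|].
  split; [intros x y; unfold join; rewrite (anti _ _ (le_meet_l x y)), dn; reflexivity|].
  split; [exact dist|].
  split; [exact Hbot|].
  split; [intros x; unfold join; rewrite dn, Hbot; reflexivity|].
  split; [exact Hc|].
  intros x; unfold join; rewrite dn, comm, Hc; reflexivity.
Qed.
End Core.

Section Conv.
Variable A : malg.
Variables (j : A -> A -> A) (b t : A).
Local Notation m := (@mt A).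
Local Notation n := (@cp A).
Hypothesis mc : forall x y, m x y = m y x.
Hypothesis jc : forall x y, j x y = j y x.
Hypothesis ma : forall x y z, m x (m y z) = m (m x y) z.
Hypothesis ja : forall x y z, j x (j y z) = j (j x y) z.
Hypothesis ab1 : forall x y, m x (j x y) = x.
Hypothesis ab2 : forall x y, j x (m x y) = x.
Hypothesis ds : forall x y z, m x (j y z) = j (m x y) (m x z).
Hypothesis mb : forall x, m x b = b.
Hypothesis jt : forall x, j x t = t.
Hypothesis mcp : forall x, m x (n x) = b.
Hypothesis jcp : forall x, j x (n x) = t.

Lemma jdist : forall x y z, j x (m y z) = m (j x y) (j x z).
Proof.
  intros x y z. symmetry.
  rewrite ds, (mc (j x y) x), ab1, (mc (j x y) z), ds, ja, (mc z x), ab2, (mc z y). reflexivity.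
Qed.
Lemma j0 : forall x, j x b = x.
Proof. intro x. rewrite <- (mb x). apply ab2. Qed.
Lemma m1 : forall x, m x t = x.
Proof. intro x. rewrite <- (jt x). apply ab1. Qed.
Lemma uniq : forall x y, m x y = b -> j x y = t -> y = n x.
Proof.
  intros x y H1 H2.
  assert (Ey : y = m y (n x)).
  { rewrite <- (m1 y) at 1. rewrite <- (jcp x), ds, (mc y x), H1, jc, j0. reflexivity. }
  assert (Ex : n x = m (n x) y).
  { rewrite <- (m1 (n x)) at 1. rewrite <- H2, ds, (mc (n x) x), mcp, jc, j0. reflexivity. }
  transitivity (m y (n x)). exact Ey. rewrite mc. symmetry. exact Ex.
Qed.
Lemma dnc : forall x, n (n x) = x.
Proof. intro x. symmetry. apply uniq. rewrite mc. apply mcp. rewrite jc. apply jcp. Qed.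
Lemma dm : forall x y, n (m x y) = j (n x) (n y).
Proof.
  intros x y. symmetry. apply uniq.
  - rewrite ds. rewrite (mc x y) at 1. rewrite <- ma, mcp, mb. rewrite <- ma, mcp, mb. apply j0.
  - rewrite jc, jdist.
    rewrite (jc (j (n x) (n y)) x), ja, jcp, (jc t), jt.
    rewrite (jc (n x) (n y)), (jc (j (n y) (n x)) y), ja, jcp, (jc t), jt. apply m1.
Qed.
Lemma conv_A5 : forall x y z, m x (m y z) = m (m y x) z.
Proof. intros x y z. rewrite ma, (mc x y). reflexivity. Qed.
Lemma conv_J : forall x y, x = m (n (m (n x) y)) (n (m (n x) (n y))).
Proof.
  intros x y. rewrite !dm, !dnc, <- jdist, (mc (n y) y), mcp, j0. reflexivity.
Qed.
End Conv.

Definition M1 : malg := @MAlg bool (fun x _ => x) (fun x => x) true.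
Definition M2 : malg := @MAlg bool (fun _ _ => true) (fun x => x) true.

Theorem theorem6p1 :
  (* {A5, J5'} defines BA *)
  (forall A : malg, (satA5 A /\ satJ5' A) <-> in_BA A) /\
  (* independence: J5' does not imply A5 *)
  (exists A : malg, satJ5' A /\ ~ satA5 A) /\
  (* independence: A5 does not imply J5' *)
  (exists A : malg, satA5 A /\ ~ satJ5' A).
Proof.
  split; [|split].
  - intro A. split.
    + intros [H1 H2]. exact (to_BA A H1 H2).
    + intros [j [b [t H]]].
      destruct H as (mc & jc & ma & ja & ab1 & ab2 & ds & mb & jt & mcp & jcp).
      split.
      * intros x y z. eapply conv_A5; eassumption.
      * intros x y. eapply conv_J; eassumption.
  - exists M1. split.
    + intros x y. reflexivity.
    + intro H. specialize (H true false true). discriminate H.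
  - exists M2. split.
    + intros x y z. reflexivity.
    + intro H. specialize (H false false). discriminate H.
Qed.
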